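(* Let $m\ge1$ and let $Q$ be a quadratic form on $\mathbb{F}_2^{\oplus2m}$ of Arf invariant $1$ with polar form the standard alternating form $\langle,\rangle$. Let $\mathrm{O}(Q)\subset\mathrm{Sp}_{2m}(\mathbb{F}_2)$ be the group of $\mathbb{F}_2$-linear automorphisms preserving $Q$, with identity $e$. Then there exist $\sigma,\tau\in\mathrm{O}(Q)$ such that: (a) $\sigma\neq e$; (b) $\tau^2=e$; (c) $\tau\sigma\tau=\sigma^{-1}$; (d) for every $i$ with $\sigma^i\neq e$, $\sigma^i$ has no non-zero fixed vector in $\mathbb{F}_2^{\oplus2m}$; (e) for every integer $i$, $\tau\sigma^i$ has a non-zero fixed vector $x$ (possibly depending on $i$) with $Q(x)=1$.
   Context: The standard alternating form on $\mathbb{F}_2^{\oplus2m}$ with basis $e_1,\dots,e_m,f_1,\dots,f_m$: $\langle e_i,e_j\rangle=\langle f_i,f_j\rangle=0$, $\langle e_i,f_j\rangle=\langle f_j,e_i\rangle=\delta_{ij}$. A quadratic form with polar form $\langle,\rangle$ is $Q:\mathbb{F}_2^{\oplus 2m}\to\mathbb{F}_2$ with $Q(x+y)-Q(x)-Q(y)=\langle x,y\rangle$. Its Arf invariant is $\sum_{i=1}^m Q(e_i)Q(f_i)$ for any symplectic basis; equivalently it is the $a\in\{0,1\}$ such that $\#\{x: Q(x)=a\}=2^{m-1}(2^m+1)$. *)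

(* Defs.v *)
From HB Require Import structures.
From mathcomp Require Import all_boot all_order all_algebra all_fingroup.
Set Implicit Arguments. Unset Strict Implicit. Unset Printing Implicit Defensive.
Import GRing.Theory.
Local Open Scope ring_scope.

(* V = F_2^{2m} as row vectors; coordinates lshift m i <-> e_i, rshift m i <-> f_i *)
Notation V m := 'rV['F_2]_(m + m).

Definition e_vec (m : nat) (i : 'I_m) : V m := delta_mx 0 (lshift m i).
Definition f_vec (m : nat) (i : 'I_m) : V m := delta_mx 0 (rshift m i).

Definition std_form (m : nat) (x y : V m) : 'F_2 :=
  \sum_(i < m) (x 0 (lshift m i) * y 0 (rshift m i)
                + x 0 (rshift m i) * y 0 (lshift m i)).

Definition is_quadratic_form (m : nat) (Q : V m -> 'F_2) : Prop :=
  forall x y : V m, Q (x + y) - Q x - Q y = std_form x y.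

Definition arf (m : nat) (Q : V m -> 'F_2) : 'F_2 :=
  \sum_(i < m) Q (e_vec i) * Q (f_vec i).

Definition in_OQ (m : nat) (Q : V m -> 'F_2) (g : {perm V m}) : Prop :=
  (forall (a : 'F_2) (x y : V m), g (a *: x + y) = a *: g x + g y) /\
  (forall x : V m, Q (g x) = Q x).

Definition gpowz (gT : finGroupType) (g : gT) (i : int) : gT :=
  match i with
  | Posz n => (g ^+ n)%g
  | Negz n => ((g ^+ n.+1)^-1)%g
  end.

(* Main.v *)
Require Import Defs.
From HB Require Import structures.
From mathcomp Require Import all_boot all_order all_algebra all_fingroup.
From mathcomp Require Import cyclic finfield zify ring.
Set Implicit Arguments. Unset Strict Implicit. Unset Printing Implicit Defensive.
Import GRing.Theory.
Local Open Scope ring_scope.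

Section VPart.
Variable m : nat.

Lemma F2c (b : 'F_2) : b = 0 \/ b = 1.
Proof. case: b => [[|[|n]]] //= H; [left|right]; by apply: val_inj. Qed.
Lemma F2ch : 2 \in [pchar 'F_2]. Proof. exact: pchar_Fp. Qed.
Lemma F2opp (b : 'F_2) : - b = b. Proof. exact: oppr_pchar2 F2ch b. Qed.
Lemma F2add (b : 'F_2) : b + b = 0. Proof. exact: addrr_pchar2 F2ch b. Qed.
Lemma Vopp (x : V m) : - x = x.
Proof. by apply/matrixP => i j; rewrite mxE F2opp. Qed.
Lemma Vadd (x : V m) : x + x = 0.
Proof. by rewrite -{2}(Vopp x) subrr. Qed.

Lemma split_l (i : 'I_m) : split (lshift m i) = inl i.
Proof. by rewrite -[lshift m i]/(unsplit (inl i)) unsplitK. Qed.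
Lemma split_r (i : 'I_m) : split (rshift m i) = inr i.
Proof. by rewrite -[rshift m i]/(unsplit (inr i)) unsplitK. Qed.

Lemma e_l i j : (e_vec i : V m) 0 (lshift m j) = (i == j)%:R.
Proof. by rewrite /e_vec mxE eqxx eq_lshift eq_sym. Qed.
Lemma e_r i j : (e_vec i : V m) 0 (rshift m j) = 0.
Proof. by rewrite /e_vec mxE eq_rlshift andbF. Qed.
Lemma f_l i j : (f_vec i : V m) 0 (lshift m j) = 0.
Proof. by rewrite /f_vec mxE eq_lrshift andbF. Qed.
Lemma f_r i j : (f_vec i : V m) 0 (rshift m j) = (i == j)%:R.
Proof. by rewrite /f_vec mxE eqxx eq_rshift eq_sym. Qed.

Lemma sumd (F : 'I_m -> 'F_2) i : \sum_(j < m) (i == j)%:R * F j = F i.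
Proof.
rewrite (bigD1 i) //= eqxx mul1r big1 ?addr0 // => j /negbTE.
by rewrite eq_sym => ->; rewrite mul0r.
Qed.

Lemma additive_zero (D : V m -> 'F_2) :
  (forall x y, D (x + y) = D x + D y) ->
  (forall i, D (e_vec i) = 0) -> (forall i, D (f_vec i) = 0) -> forall x, D x = 0.
Proof.
move=> hD he hf x.
have D0 : D 0 = 0.
  by apply: (addrI (D 0)); rewrite -hD !addr0.
rewrite (row_sum_delta x) (big_morph D hD D0) big1 // => k _.
case: (F2c (x 0 k)) => ->; first by rewrite scale0r.
rewrite scale1r -(splitK k); case: (split k) => j /=; [exact: he | exact: hf].
Qed.

Lemma std_sym (x y : V m) : std_form x y = std_form y x.
Proof. by rewrite /std_form; apply: eq_bigr => i _; ring. Qed.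
Lemma std_addr (x y z : V m) : std_form x (y + z) = std_form x y + std_form x z.
Proof. by rewrite /std_form -big_split; apply: eq_bigr => i _ /=; rewrite !mxE; ring. Qed.
Lemma std_self (x : V m) : std_form x x = 0.
Proof. by rewrite /std_form big1 // => i _; rewrite mulrC F2add. Qed.
Lemma std_e (x : V m) i : std_form x (e_vec i) = x 0 (rshift m i).
Proof.
rewrite /std_form -(sumd (fun j => x 0 (rshift m j)) i); apply: eq_bigr => j _.
by rewrite e_l e_r mulr0 add0r mulrC.
Qed.
Lemma std_f (x : V m) i : std_form x (f_vec i) = x 0 (lshift m i).
Proof.
rewrite /std_form -(sumd (fun j => x 0 (lshift m j)) i); apply: eq_bigr => j _.
by rewrite f_l f_r mulr0 addr0 mulrC.
Qed.
Lemma std_scaler (x y : V m) a : std_form x (a *: y) = a * std_form x y.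
Proof.
by case: (F2c a) => ->; rewrite ?scale0r ?scale1r ?mul0r ?mul1r //;
  apply: (addrI (std_form x 0)); rewrite -std_addr !addr0.
Qed.

Variable Q : V m -> 'F_2.
Hypothesis hQ : is_quadratic_form Q.

Lemma QD x y : Q (x + y) = Q x + Q y + std_form x y.
Proof. by move/eqP: (hQ x y); rewrite !subr_eq => /eqP ->; ring. Qed.

Definition Pc (x : V m) : 'F_2 := \sum_(i < m) (x 0 (lshift m i) * Q (e_vec i)
   + x 0 (rshift m i) * Q (f_vec i) + x 0 (lshift m i) * x 0 (rshift m i)).

Lemma Pc_polar x y : Pc (x + y) = Pc x + Pc y + std_form x y.
Proof. by rewrite /Pc /std_form -!big_split; apply: eq_bigr => i _ /=; rewrite !mxE; ring. Qed.

Lemma Q_coord x : Q x = Pc x.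
Proof.
apply/eqP; rewrite -subr_eq0; apply/eqP; move: x.
apply: additive_zero.
- by move=> x y; rewrite QD Pc_polar; ring.
- move=> i; rewrite /Pc.
  rewrite (eq_bigr (fun j => (i == j)%:R * Q (e_vec j))); first by rewrite sumd subrr.
  by move=> j _; rewrite e_l e_r !mul0r !mulr0 !addr0.
- move=> i; rewrite /Pc.
  rewrite (eq_bigr (fun j => (i == j)%:R * Q (f_vec j))); first by rewrite sumd subrr.
  by move=> j _; rewrite f_l f_r !mul0r ?mulr0 add0r addr0.
Qed.

Definition tv (a x : V m) : V m := x + std_form a x *: a.

Lemma tv_Q a x : Q a = 0 -> Q (tv a x) = Q x + std_form a x.
Proof.
move=> Qa; rewrite /tv; case: (F2c (std_form a x)) => E; rewrite E.
  by rewrite scale0r !addr0.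
by rewrite scale1r QD Qa addr0 std_sym E.
Qed.

Lemma tv_inv a x : tv a (tv a x) = x.
Proof.
rewrite /tv std_addr std_scaler std_self mulr0 addr0 -addrA.
by rewrite Vadd addr0.
Qed.

Lemma tv_add a x y : tv a (x + y) = tv a x + tv a y.
Proof. by rewrite /tv std_addr scalerDl addrACA. Qed.

Lemma transport (R : V m -> 'F_2) :
  (forall x y, R (x + y) = R x + R y + std_form x y) -> arf R = 1 -> arf Q = 1 ->
  exists a, Q a = 0 /\ forall x, R x = Q (tv a x).
Proof.
move=> hR aR aQ.
pose D x := R x - Q x.
have hD x y : D (x + y) = D x + D y by rewrite /D hR QD; ring.
pose a : V m := \row_k (match split k with inl i => D (f_vec i) | inr i => D (e_vec i) end).
have al i : a 0 (lshift m i) = D (f_vec i) by rewrite mxE split_l.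
have ar i : a 0 (rshift m i) = D (e_vec i) by rewrite mxE split_r.
have Dstd x : D x = std_form a x.
  apply/eqP; rewrite -subr_eq0; apply/eqP; move: x; apply: additive_zero.
  - by move=> x y; rewrite hD std_addr; ring.
  - by move=> i; rewrite std_e ar subrr.
  - by move=> i; rewrite std_f al subrr.
have RQ x : R x = Q x + std_form a x by rewrite -Dstd /D addrC subrK.
have Qa : Q a = 0.
  have : arf R = arf Q + Q a.
    rewrite Q_coord /arf /Pc -big_split; apply: eq_bigr => i _ /=.
    by rewrite !RQ std_e std_f ar al /D; ring.
  by rewrite aR aQ => E; apply: (addrI 1); rewrite addr0 -E.
exists a; split => // x; by rewrite tv_Q // RQ.
Qed.

End VPart.

Section FieldPart.
Variables (K : finFieldType) (m : nat).
Hypotheses (hm : (0 < m)%N) (ch : 2 \in [pchar K]) (cardK : #|K| = (2 ^ (m + m))%N).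

Let q := (2 ^ m)%N.

Lemma natp2 n : [pchar K].-nat (2 ^ n)%N.
Proof.
rewrite pnatX; case: n => [|n]; last by rewrite orbF pnatE.
by rewrite orbT.
Qed.

Lemma frD n (x y : K) : (x + y) ^+ (2 ^ n) = x ^+ (2 ^ n) + y ^+ (2 ^ n).
Proof. exact: exprDn_pchar (natp2 n). Qed.

Lemma frM n (x y : K) : (x * y) ^+ n = x ^+ n * y ^+ n.
Proof. exact: exprMn. Qed.

Lemma frsum n (I : finType) (F : I -> K) :
  (\sum_i F i) ^+ (2 ^ n) = \sum_i (F i) ^+ (2 ^ n).
Proof.
apply: (big_morph (fun x : K => x ^+ (2 ^ n))).
  by move=> x y; rewrite frD.
by rewrite expr0n expn_eq0.
Qed.

Lemma qq (x : K) : x ^+ (q * q) = x.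
Proof. by rewrite -expnD -cardK expf_card. Qed.

Lemma oppK2 (x : K) : - x = x. Proof. exact: oppr_pchar2. Qed.
Lemma addKK (x : K) : x + x = 0. Proof. exact: addrr_pchar2. Qed.

Definition T (y : K) : K := \sum_(j < m) y ^+ (2 ^ j).

Lemma T_add x y : T (x + y) = T x + T y.
Proof. by rewrite /T -big_split /=; apply: eq_bigr => j _; rewrite frD. Qed.

Lemma T0 : T 0 = 0.
Proof. by rewrite /T big1 // => j _; rewrite expr0n expn_eq0. Qed.

Lemma T_sq y : T (y ^+ 2) = T y + y ^+ q + y.
Proof.
rewrite /T /q; case: m hm => // n _.
rewrite big_ord_recr big_ord_recl /= expn0 expr1.
under eq_bigr => j _ do rewrite -exprM -expnS.
under [X in _ = _ + X + _ + _]eq_bigr => j _ do rewrite /bump leq0n add1n.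
rewrite -exprM -expnS.
by rewrite [RHS]addrC !addrA addKK add0r.
Qed.

Lemma T_frob y : T y ^+ 2 = T (y ^+ 2).
Proof.
rewrite /T; have := frsum 1 (fun j : 'I_m => y ^+ (2 ^ j)); rewrite expn1 => ->.
by apply: eq_bigr => j _; rewrite -!exprM mulnC.
Qed.

Lemma T_L y : y ^+ q = y -> T y = 0 \/ T y = 1.
Proof.
move=> yL; have : T y * (T y - 1) = 0.
  by rewrite mulrBr -expr2 T_frob T_sq yL mulr1 -[T y + y + y]addrA addKK addr0 subrr.
by move/eqP; rewrite mulf_eq0 subr_eq0 => /orP [/eqP|/eqP]; [left|right].
Qed.

Lemma q_ge2 : (2 <= q)%N.
Proof. by rewrite /q; case: m hm => // n _; rewrite expnS leq_pmulr ?expn_gt0. Qed.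

Definition emb (b : 'F_2) : K := (b : nat)%:R.
Definition tr (z : K) : 'F_2 := if z == 0 then 0 else 1.

Lemma F2cases (b : 'F_2) : b = 0 \/ b = 1.
Proof. case: b => [[|[|n]]] //= H; [left|right]; by apply: val_inj. Qed.

Lemma emb0 : emb 0 = 0. Proof. by []. Qed.
Lemma emb1 : emb 1 = 1. Proof. by rewrite /emb /= mulr1n. Qed.
Lemma two0 : (2%:R : K) = 0. Proof. exact: pcharf0 ch. Qed.

Lemma embD a b : emb (a + b) = emb a + emb b.
Proof.
case: (F2cases a) => ->; case: (F2cases b) => ->;
  rewrite ?add0r ?addr0 ?emb0 ?emb1 ?add0r ?addr0 //.
have -> : (1 + 1 : 'F_2) = 0 by apply: val_inj.
by rewrite emb0 addKK.
Qed.

Lemma embM a b : emb (a * b) = emb a * emb b.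
Proof.
case: (F2cases a) => ->; case: (F2cases b) => ->;
  by rewrite ?mul0r ?mulr0 ?mul1r ?mulr1 ?emb0 ?emb1 ?mul0r ?mulr0 ?mul1r.
Qed.

Lemma trK b : tr (emb b) = b.
Proof. by case: (F2cases b) => ->; rewrite ?emb0 ?emb1 /tr ?eqxx ?oner_eq0. Qed.

Lemma emb_inj : injective emb.
Proof. by move=> a b H; rewrite -(trK a) H trK. Qed.

Lemma embT y : y ^+ q = y -> emb (tr (T y)) = T y.
Proof. by move/T_L => [] ->; rewrite /tr ?eqxx ?oner_eq0 ?emb0 ?emb1. Qed.

Lemma T_scal b y : T (emb b * y) = emb b * T y.
Proof. by case: (F2cases b) => ->; rewrite ?emb0 ?emb1 ?mul0r ?mul1r ?T0. Qed.

Lemma T_sum (I : finType) (F : I -> K) : T (\sum_i F i) = \sum_i T (F i).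
Proof. exact: (big_morph T T_add T0). Qed.

Lemma T_sq_L y : y ^+ q = y -> T (y ^+ 2) = T y.
Proof. by move=> yL; rewrite T_sq yL -addrA addKK addr0. Qed.

Lemma qq1 : ((q + 1) * (q - 1) = q * q - 1)%N.
Proof. have := q_ge2; nia. Qed.

Lemma exists_prim : exists g : K, (q * q - 1)%N.-primitive_root g.
Proof.
have n_gt0 : (0 < q * q - 1)%N by have := q_ge2; nia.
have /hasP[g _ Hg] : has (q * q - 1)%N.-primitive_root (enum [set~ (0 : K)]).
  apply: has_prim_root => //; last by rewrite -cardE cardsC1 cardK expnD subn1.
    apply/allP => x; rewrite mem_enum !inE => x0.
    rewrite unity_rootE; apply/eqP; apply: (mulfI x0).
    rewrite -exprS mulr1 subn1 prednK ?qq //; have := q_ge2; nia.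
  exact: enum_uniq.
by exists g.
Qed.

Definition N (z : K) : K := z ^+ (q + 1).
Lemma NL z : N z ^+ q = N z.
Proof.
by rewrite /N -exprM mulnDl mul1n exprD qq -exprS addn1.
Qed.

Definition Lset : {set K} := [set y : K | y ^+ q == y].

Lemma card_L_le : (#|Lset| <= q)%N.
Proof.
pose p : {poly K} := 'X^q - 'X.
have sp : size p = q.+1.
  by rewrite /p size_polyDl size_polyXn // size_polyN size_polyX ltnS q_ge2.
have p0 : p != 0 by rewrite -size_poly_gt0 sp.
have := max_poly_roots p0 (rs := enum Lset).
rewrite sp ltnS cardE; apply.
  apply/allP => x; rewrite mem_enum inE => /eqP xL.
  by rewrite /root /p !hornerE xL subrr.
exact: enum_uniq.
Qed.

Variable g : K.
Hypothesis hg : (q * q - 1)%N.-primitive_root g.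

Lemma qq_gt : (q - 1 < q * q - 1)%N /\ (0 < q - 1)%N.
Proof. have := q_ge2; split; nia. Qed.

Lemma g_pow1 k : (0 < k)%N -> (k < q * q - 1)%N -> g ^+ k != 1.
Proof.
move=> k0 kn; rewrite -(prim_order_dvd hg); apply/negP => /dvdn_leq.
by move=> /(_ k0); rewrite leqNgt kn.
Qed.

Lemma g0 : g != 0.
Proof.
apply/negP => /eqP g0; have := prim_expr_order hg; rewrite g0 expr0n.
case: qq_gt => _ h; have -> : (q * q - 1 == 0)%N = false by have := q_ge2; nia.
by move/eqP; rewrite eq_sym oner_eq0.
Qed.

Lemma card_L : #|Lset| = q.
Proof.
apply/eqP; rewrite eqn_leq card_L_le /=.
pose f (k : 'I_(q - 1)) := g ^+ ((q + 1) * k).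
have finj : injective f.
  move=> a b /eqP; rewrite /f (eq_prim_root_expr hg) -qq1 -!muln_modr.
  rewrite eqn_pmul2l ?addn1 // !modn_small ?ltn_ord // => /eqP H.
  exact: val_inj.
have sub : [set f k | k in 'I_(q - 1)] \subset Lset :\ 0.
  apply/subsetP => x /imsetP[k _ ->]; rewrite !inE /f expf_eq0 negb_and g0 orbT /=.
  by rewrite mulnC exprM; apply/eqP; exact: NL.
have := subset_leq_card sub; rewrite card_imset // card_ord => h.
rewrite (cardsD1 0 Lset) !inE expr0n.
have -> : (q == 0)%N = false by have := q_ge2; nia.
rewrite eqxx /=; apply: leq_trans (leq_add (leqnn 1) h); have := q_ge2; clear; lia.
Qed.

Lemma gq_ne : g ^+ q != g.
Proof.
apply/negP => /eqP H; case: qq_gt => h1 h2.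
have := g_pow1 h2 h1; apply/negP; rewrite negbK.
apply/eqP; apply: (mulfI g0); rewrite -exprS subn1 prednK ?mulr1 //.
by have := q_ge2; clear; lia.
Qed.

Definition zeta : K := g ^+ (q - 1).

Lemma zeta_q1 : zeta ^+ (q + 1) = 1.
Proof. by rewrite /zeta -exprM mulnC qq1 (prim_expr_order hg). Qed.

Lemma zeta_ne1 : zeta != 1.
Proof. by case: qq_gt => h1 h2; exact: g_pow1. Qed.

Lemma zeta0 : zeta != 0.
Proof. by rewrite /zeta expf_eq0 negb_and g0 orbT. Qed.

Definition w0 : K := g + g ^+ q.
Lemma w0_ne : w0 != 0.
Proof.
apply/negP => /eqP H; move: gq_ne.
by rewrite -subr_eq0 oppK2 addrC -/w0 H eqxx.
Qed.
Lemma w0L : w0 ^+ q = w0.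
Proof. by rewrite /w0 /q frD -exprM qq addrC. Qed.

Definition theta : K := g / w0.
Lemma thetaq : theta ^+ q = theta + 1.
Proof.
rewrite /theta exprMn exprVn w0L; apply: (mulIf w0_ne).
rewrite mulrDl !mulfVK ?w0_ne // mul1r /w0 addrA addKK add0r //.
Qed.

Definition c0 : K := theta ^+ 2 + theta.
Lemma theta_N : N theta = c0.
Proof. by rewrite /N addn1 exprSr thetaq /c0 mulrDl mul1r expr2. Qed.
Lemma c0L : c0 ^+ q = c0.
Proof. by rewrite -theta_N NL. Qed.
Lemma T_c0 : T c0 = 1.
Proof.
rewrite /c0 T_add T_sq thetaq addrC !addrA addKK add0r.
by rewrite addrAC addKK add0r.
Qed.

Definition c1 : K := c0 ^+ (2 ^ m.-1).
Lemma c1_sq : c1 ^+ 2 = c0.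
Proof.
by rewrite /c1 -exprM -expnSr prednK // c0L.
Qed.
Lemma c1L : c1 ^+ q = c1.
Proof. by rewrite /c1 -exprM mulnC exprM c0L. Qed.

Lemma inLP y : reflect (y ^+ q = y) (y \in Lset).
Proof. by rewrite inE; apply: eqP. Qed.

Lemma inL_add a b : a \in Lset -> b \in Lset -> a + b \in Lset.
Proof. by move=> /inLP ha /inLP hb; apply/inLP; rewrite /q frD ha hb. Qed.
Lemma inL_mul a b : a \in Lset -> b \in Lset -> a * b \in Lset.
Proof. by move=> /inLP ha /inLP hb; apply/inLP; rewrite exprMn ha hb. Qed.
Lemma inL_inv a : a \in Lset -> a^-1 \in Lset.
Proof. by move=> /inLP ha; apply/inLP; rewrite exprVn ha. Qed.
Lemma inL0 : (0 : K) \in Lset.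
Proof. by apply/inLP; rewrite expr0n; have := q_ge2; case: (q). Qed.
Lemma inL_emb b : emb b \in Lset.
Proof. case: (F2cases b) => ->; rewrite ?emb0 ?emb1 ?inL0 //; apply/inLP; exact: expr1n. Qed.
Lemma inL_T a : a \in Lset -> T a \in Lset.
Proof. by move=> /inLP/embT <-; exact: inL_emb. Qed.
Lemma inL_sum (I : finType) (F : I -> K) : (forall i, F i \in Lset) -> \sum_i F i \in Lset.
Proof. move=> H; apply: (big_ind (fun x => x \in Lset)) => //; [exact: inL0 | exact: inL_add]. Qed.

Lemma T_scalL a y : a \in Lset -> T (T a * y) = T a * T y.
Proof. by move=> /inLP/embT <-; exact: T_scal. Qed.

Definition dualsys (k : nat) (l ls : nat -> K) :=
  (forall i, (i < k)%N -> l i \in Lset /\ ls i \in Lset) /\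
  (forall i j, (i < k)%N -> (j < k)%N -> T (l i * ls j) = (i == j)%:R).

Lemma sum_delta k (F : 'I_k -> K) (i : nat) (hi : (i < k)%N) :
  \sum_(j < k) F j * (i == j)%:R = F (Ordinal hi).
Proof.
rewrite (bigD1 (Ordinal hi)) //= eqxx mulr1 big1 ?addr0 // => j hj.
have -> : (i == j) = false; last by rewrite mulr0.
by apply/negbTE; apply: contra hj => /eqP ij; apply/eqP; apply: val_inj; rewrite /= ij.
Qed.

Lemma sum_delta' k (F : 'I_k -> K) (i : nat) (hi : (i < k)%N) :
  \sum_(j < k) F j * (j == i :> nat)%:R = F (Ordinal hi).
Proof. by rewrite -(sum_delta F hi); apply: eq_bigr => j _; rewrite eq_sym. Qed.

Lemma dual_step k l ls : (k < m)%N -> dualsys k l ls ->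
  exists l' ls', dualsys k.+1 l' ls'.
Proof.
move=> km [hL hd].
pose h (w : K) : {ffun 'I_k -> 'F_2} := [ffun i : 'I_k => tr (T (w * ls i))].
have [w [wL w0 hw]] : exists w : K, [/\ w \in Lset, w != 0 &
    forall i : nat, (i < k)%N -> T (w * ls i) = 0].
  case E: [exists w1, exists w2,
      [&& w1 \in Lset, w2 \in Lset, w1 != w2 & h w1 == h w2]].
    move/existsP: E => [w1 /existsP [w2 /and4P [h1 h2 h3 /eqP h4]]].
    exists (w1 + w2); split; first exact: inL_add.
      by apply: contra h3 => /eqP H; rewrite -subr_eq0 oppK2 H.
    move=> i hi; have := congr1 (fun f : {ffun 'I_k -> 'F_2} => f (Ordinal hi)) h4; rewrite !ffunE /=.
    move/(congr1 emb); rewrite !embT; last first.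
    - by apply/inLP; apply: inL_mul => //; case: (hL i hi).
    - by apply/inLP; apply: inL_mul => //; case: (hL i hi).
    by rewrite mulrDl T_add => ->; rewrite addKK.
  have hinj : {in Lset &, injective h}.
    move=> w1 w2 h1 h2 he; apply/eqP; apply: contraFT E => hne.
    apply/existsP; exists w1; apply/existsP; exists w2.
    by rewrite h1 h2 hne he eqxx.
  move/imset_injP: hinj => /eqP hc.
  have : (#|[set h x | x in Lset]| <= 2 ^ k)%N.
    by rewrite (leq_trans (max_card _)) // card_ffun card_ord card_ord.
  rewrite hc card_L /q leq_exp2l // leqNgt km //.
pose z := c0 / w.
have zL : z \in Lset by apply: inL_mul; [apply/inLP; exact: c0L | exact: inL_inv].
have wz : T (w * z) = 1 by rewrite /z mulrC mulfVK // T_c0.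
pose nls := z + \sum_(j < k) T (l j * z) * ls j.
exists (fun n => if n == k then w else l n), (fun n => if n == k then nls else ls n).
have ljz j : (j < k)%N -> l j * z \in Lset.
  by move=> hj; apply: inL_mul => //; case: (hL j hj).
have key i : (i < k)%N -> T (l i * nls) = 0.
  move=> hi; rewrite /nls mulrDr T_add mulr_sumr T_sum.
  under eq_bigr => j _ do rewrite mulrCA T_scalL ?ljz // (hd i j hi (ltn_ord j)).
  by rewrite sum_delta /= addKK.
have key2 : T (w * nls) = 1.
  rewrite /nls mulrDr T_add mulr_sumr T_sum wz big1 ?addr0 // => j _.
  by rewrite mulrCA T_scalL ?ljz // hw // mulr0.
split.
  move=> i; rewrite ltnS leq_eqVlt => /orP [/eqP ->|hi]; rewrite ?eqxx.
    split; first exact: wL.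
    apply: inL_add; first exact: zL.
    apply: inL_sum => j.
    apply: inL_mul; first by apply: inL_T; exact: (ljz _ (ltn_ord j)).
    by case: (hL j (ltn_ord j)) => _ H; exact: H.
  by rewrite (ltn_eqF hi); exact: hL.
move=> i j; rewrite !ltnS leq_eqVlt => /orP [/eqP ->|hi];
  rewrite leq_eqVlt => /orP [/eqP ->|hj].
- by rewrite eqxx key2 mulr1n.
- by rewrite eqxx (ltn_eqF hj) (hw _ hj) (gtn_eqF hj) mulr0n.
- by rewrite eqxx (ltn_eqF hi) (key _ hi) mulr0n.
- rewrite (ltn_eqF hi) (ltn_eqF hj); exact: (hd _ _ hi hj).
Qed.

Lemma dual_ex k : (k <= m)%N -> exists l ls, dualsys k l ls.
Proof.
elim: k => [_|k IH hk].
  by exists (fun _ => 0), (fun _ => 0); split => i.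
have [l [ls hd]] := IH (ltnW hk).
exact: dual_step hk hd.
Qed.

Variables l ls : nat -> K.
Hypothesis hds : dualsys m l ls.

Lemma lL i : (i < m)%N -> l i \in Lset.
Proof. by move=> hi; case: hds => H _; case: (H i hi). Qed.
Lemma lsL i : (i < m)%N -> ls i \in Lset.
Proof. by move=> hi; case: hds => H _; case: (H i hi). Qed.
Lemma hdual i j : (i < m)%N -> (j < m)%N -> T (l i * ls j) = (i == j)%:R.
Proof. by case: hds => _ H; apply: H. Qed.

Lemma sum_deltaO n (F : 'I_n -> K) (i : 'I_n) :
  \sum_(j < n) (i == j)%:R * F j = F i.
Proof.
rewrite (bigD1 i) //= eqxx mul1r big1 ?addr0 // => j /negbTE.
by rewrite eq_sym => ->; rewrite mul0r.
Qed.

Lemma Tcomb (c : 'I_m -> 'F_2) (j : 'I_m) :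
    T ((\sum_(i < m) emb (c i) * l i) * ls j) = emb (c j).
Proof.
rewrite mulr_suml T_sum.
under eq_bigr => i _ do rewrite -mulrA T_scal (hdual (ltn_ord i) (ltn_ord j)).
rewrite -[RHS](sum_deltaO (fun i => emb (c i)) j).
by apply: eq_bigr => i _; rewrite mulrC eq_sym.
Qed.

Lemma combL (c : 'I_m -> 'F_2) : \sum_(i < m) emb (c i) * l i \in Lset.
Proof. apply: inL_sum => i; apply: inL_mul; [exact: inL_emb | exact: lL]. Qed.

Lemma span a : a \in Lset -> a = \sum_(i < m) T (a * ls i) * l i.
Proof.
move=> aL.
pose h (w : K) : {ffun 'I_m -> 'F_2} := [ffun i : 'I_m => tr (T (w * ls i))].
have hsurj : [set h x | x in Lset] = [set: {ffun 'I_m -> 'F_2}].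
  apply/eqP; rewrite eqEsubset subsetT /=; apply/subsetP => f _.
  apply/imsetP; exists (\sum_(i < m) emb (f i) * l i); first exact: combL.
  by apply/ffunP => j; rewrite ffunE Tcomb trK.
have hc : #|[set h x | x in Lset]| = #|Lset|.
  by rewrite hsurj cardsT card_ffun card_L card_ord card_ord.
have hinj : {in Lset &, injective h}.
  by apply/imset_injP; apply/eqP; exact: hc.
have aLs (i : 'I_m) : a * ls i \in Lset.
  by apply: inL_mul; [exact: aL | exact: (lsL (ltn_ord i))].
have -> : \sum_(i < m) T (a * ls i) * l i =
    \sum_(i < m) emb (tr (T (a * ls i))) * l i.
  by apply: eq_bigr => i _; rewrite embT //; apply/inLP; exact: aLs.
apply: hinj; [exact: aL | exact: combL |].
apply/ffunP => j; rewrite !ffunE Tcomb trK.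
by rewrite -{1}[T (a * ls j)]embT ?trK //; apply/inLP; exact: aLs.
Qed.

Definition ue (x : V m) : K := \sum_(i < m) emb (x 0 (lshift m i)) * l i.
Definition vf (x : V m) : K := \sum_(i < m) emb (x 0 (rshift m i)) * ls i.
Definition phi (x : V m) : K := ue x + vf x * theta.
Definition Qp (z : K) : 'F_2 := tr (T (N z)).
Definition R (x : V m) : 'F_2 := Qp (phi x).

Lemma ueD x y : ue (x + y) = ue x + ue y.
Proof. by rewrite /ue -big_split; apply: eq_bigr => i _; rewrite mxE embD mulrDl. Qed.
Lemma vfD x y : vf (x + y) = vf x + vf y.
Proof. by rewrite /vf -big_split; apply: eq_bigr => i _; rewrite mxE embD mulrDl. Qed.
Lemma phiD x y : phi (x + y) = phi x + phi y.
Proof. by rewrite /phi ueD vfD mulrDl addrACA. Qed.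

Lemma combLs (c : 'I_m -> 'F_2) : \sum_(i < m) emb (c i) * ls i \in Lset.
Proof. apply: inL_sum => i; apply: inL_mul; [exact: inL_emb | exact: lsL]. Qed.

Lemma ueL x : ue x \in Lset. Proof. exact: combL. Qed.
Lemma vfL x : vf x \in Lset. Proof. exact: combLs. Qed.

Lemma Tcombs (c : 'I_m -> 'F_2) (j : 'I_m) :
    T (l j * \sum_(i < m) emb (c i) * ls i) = emb (c j).
Proof.
rewrite mulr_sumr T_sum.
under eq_bigr => i _ do rewrite mulrCA T_scal (hdual (ltn_ord j) (ltn_ord i)).
rewrite -[RHS](sum_deltaO (fun i => emb (c i)) j).
by apply: eq_bigr => i _; rewrite mulrC.
Qed.

Lemma frq (a b : K) : (a + b) ^+ q = a ^+ q + b ^+ q.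
Proof. exact: frD. Qed.

Lemma N_exp z : N z = z ^+ q * z.
Proof. by rewrite /N addn1 exprSr. Qed.

Lemma N_add z w : N (z + w) = N z + N w + (z * w ^+ q + z ^+ q * w).
Proof. rewrite !N_exp frq; ring. Qed.

Lemma N_mul z w : N (z * w) = N z * N w.
Proof. by rewrite /N exprMn. Qed.

Lemma NL_elt a : a \in Lset -> N a = a ^+ 2.
Proof. by move=> /inLP aL; rewrite N_exp aL expr2. Qed.

Lemma polar_L u v u' v' : u \in Lset -> v \in Lset -> u' \in Lset -> v' \in Lset ->
  (u + v * theta) * (u' + v' * theta) ^+ q + (u + v * theta) ^+ q * (u' + v' * theta)
  = u * v' + v * u'.
Proof.
move=> /inLP hu /inLP hv /inLP hu' /inLP hv'.
rewrite !frq [(v * theta) ^+ q]exprMn [(v' * theta) ^+ q]exprMn hu hv hu' hv' thetaq.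
have E : (u + v * theta) * (u' + v' * (theta + 1)) + (u + v * (theta + 1)) * (u' + v' * theta)
  = u * v' + v * u' + 2%:R * (u * u' + u * v' * theta + v * u' * theta
      + v * v' * theta * theta + v * v' * theta) by ring.
by rewrite E two0 mul0r addr0.
Qed.

Lemma emb_sum (I : finType) (F : I -> 'F_2) : emb (\sum_i F i) = \sum_i emb (F i).
Proof. exact: (big_morph emb embD emb0). Qed.

Lemma T_uv x y : T (ue x * vf y) =
  \sum_(j < m) emb (x 0 (lshift m j)) * emb (y 0 (rshift m j)).
Proof.
rewrite /vf mulr_sumr T_sum; apply: eq_bigr => j _.
rewrite mulrCA T_scal mulrC; congr (_ * _).
rewrite /ue mulr_suml T_sum.
under eq_bigr => i _ do rewrite -mulrA T_scal (hdual (ltn_ord i) (ltn_ord j)).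
rewrite -[RHS](sum_deltaO (fun i => emb (x 0 (lshift m i))) j).
by apply: eq_bigr => i _; rewrite mulrC eq_sym.
Qed.

Lemma embR x : emb (R x) = T (N (phi x)).
Proof. by rewrite /R /Qp embT //; exact: NL. Qed.

Lemma R_polar x y : R (x + y) = R x + R y + std_form x y.
Proof.
apply: emb_inj; rewrite !embD !embR phiD N_add T_add [T (N _ + N _)]T_add.
congr (_ + _); rewrite /phi polar_L ?ueL ?vfL // T_add T_uv mulrC T_uv.
rewrite /std_form emb_sum -big_split /=; apply: eq_bigr => i _.
by rewrite embD !embM [emb (x 0 _) * emb (y 0 (lshift _ _))]mulrC.
Qed.

Lemma emb_nat (b : bool) : emb (b%:R) = b%:R.
Proof. by case: b; rewrite ?emb0 ?emb1. Qed.

Lemma ue_e i : ue (e_vec i) = l i.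
Proof.
rewrite /ue -[RHS](sum_deltaO (fun j => l j) i); apply: eq_bigr => j _.
by rewrite /e_vec mxE eqxx eq_lshift eq_sym emb_nat.
Qed.
Lemma vf_e i : vf (e_vec i) = 0.
Proof.
rewrite /vf big1 // => j _.
by rewrite /e_vec mxE eq_rlshift andbF emb_nat mul0r.
Qed.
Lemma ue_f i : ue (f_vec i) = 0.
Proof.
rewrite /ue big1 // => j _.
by rewrite /f_vec mxE eq_lrshift andbF emb_nat mul0r.
Qed.
Lemma vf_f i : vf (f_vec i) = ls i.
Proof.
rewrite /vf -[RHS](sum_deltaO (fun j => ls j) i); apply: eq_bigr => j _.
by rewrite /f_vec mxE eqxx eq_rshift eq_sym emb_nat.
Qed.

Lemma R_e i : emb (R (e_vec i)) = T (l i).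
Proof.
rewrite embR /phi ue_e vf_e mul0r addr0 NL_elt ?T_sq_L //; first by apply/inLP; exact: lL.
exact: lL.
Qed.

Lemma R_f i : emb (R (f_vec i)) = T (ls i * c1).
Proof.
rewrite embR /phi ue_f vf_f add0r N_mul theta_N NL_elt; last exact: lsL.
rewrite -c1_sq -exprMn T_sq_L //; apply/inLP; apply: inL_mul; first exact: lsL.
by apply/inLP; exact: c1L.
Qed.

Lemma arfR : arf R = 1.
Proof.
apply: emb_inj; rewrite /arf emb_sum emb1.
have c1L' : c1 \in Lset by apply/inLP; exact: c1L.
have cls (i : 'I_m) : c1 * ls i \in Lset.
  by apply: inL_mul; [exact: c1L' | exact: (lsL (ltn_ord i))].
under eq_bigr => i _ do rewrite embM R_e R_f [ls i * c1]mulrC [T (l i) * _]mulrC -(T_scalL _ (cls i)).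
rewrite -T_sum -(span c1L') -T_sq_L ?c1_sq ?T_c0 //; exact: c1L.
Qed.

Lemma phi0 x : phi x = 0 -> x = 0.
Proof.
move=> H.
have hv : vf x = 0.
  apply/eqP; apply/negP => /negP nz.
  have th : theta = ue x / vf x.
    apply: (mulIf nz); rewrite mulfVK // mulrC; apply/eqP.
    by rewrite -(oppK2 (ue x)) -subr_eq0 opprK addrC; apply/eqP; exact: H.
  have thL : theta \in Lset by rewrite th; apply: inL_mul; [exact: ueL | apply: inL_inv; exact: vfL].
  move/inLP: thL; rewrite thetaq => /eqP; rewrite -subr_eq0 addrC addKr.
  by rewrite oner_eq0.
have hu : ue x = 0 by move: H; rewrite /phi hv mul0r addr0.
apply/rowP => k; rewrite mxE -(splitK k); case: (split k) => j /=.
  apply: emb_inj; rewrite emb0 -(Tcomb (fun i => x 0 (lshift m i)) j).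
  by rewrite -/(ue x) hu mul0r T0.
apply: emb_inj; rewrite emb0 -(Tcombs (fun i => x 0 (rshift m i)) j).
by rewrite -/(vf x) hv mulr0 T0.
Qed.

Lemma phi_inj : injective phi.
Proof.
move=> x y E; have : phi (x + y) = 0 by rewrite phiD E addKK.
by move/phi0/eqP; rewrite addr_eq0 Vopp => /eqP.
Qed.

Lemma lin_of_add (f : V m -> V m) : (forall x y, f (x + y) = f x + f y) ->
  forall (a : 'F_2) x y, f (a *: x + y) = a *: f x + f y.
Proof.
move=> hf a x y; case: (F2cases a) => ->; last by rewrite !scale1r hf.
by rewrite !scale0r !add0r.
Qed.

Lemma N_zeta z : N (zeta * z) = N z.
Proof. by rewrite N_mul /N zeta_q1 mul1r. Qed.

Lemma N_frob z : N (z ^+ q) = N z.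
Proof. by rewrite /N -exprM mulnC exprM; exact: NL. Qed.

Variables (Q : V m -> 'F_2).
Hypotheses (hQ : is_quadratic_form Q) (harf : arf Q = 1).

Lemma field_main :
  exists sigma tau : {perm V m},
    [/\ (in_OQ Q sigma /\ in_OQ Q tau),
        sigma != (1%g),
        ((tau ^+ 2)%g = (1%g) /\
        (tau * sigma * tau)%g = (sigma^-1)%g),
        (forall i : int, gpowz sigma i != (1%g) ->
           forall x : V m, gpowz sigma i x = x -> x = 0)
      & (forall i : int, exists x : V m,
           [/\ x != 0, tau (gpowz sigma i x) = x & Q x = 1])].
Proof.
have [a [Qa hRa]] := transport hQ R_polar arfR harf.
pose Phi x := phi (tv a x).
have PhiQ x : Qp (Phi x) = Q x by rewrite -/(R (tv a x)) hRa tv_inv.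
have PhiD x y : Phi (x + y) = Phi x + Phi y by rewrite /Phi tv_add phiD.
have Phi_inj : injective Phi.
  by move=> x y /phi_inj E; rewrite -(tv_inv a x) E tv_inv.
have Phi_bij : bijective Phi.
  apply: (@inj_card_bij _ _ Phi Phi_inj).
  by rewrite cardK card_mx mul1n card_ord; exact: leqnn.
have [Psi PhiK PsiK] := Phi_bij.
have Psi_inj : injective Psi by exact: can_inj PsiK.
have PsiD u v : Psi (u + v) = Psi u + Psi v.
  by apply: Phi_inj; rewrite PhiD !PsiK.
have Phi0 : Phi 0 = 0 by apply: (addrI (Phi 0)); rewrite -PhiD !addr0.
pose sf x := Psi (zeta * Phi x).
pose tf x := Psi (Phi x ^+ q).
have sf_inj : injective sf.
  by move=> x y /Psi_inj /(mulfI zeta0) /Phi_inj.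
have frob_inj : injective (fun z : K => z ^+ q).
  by move=> u v /= E; rewrite -(qq u) -(qq v) !exprM E.
have tf_inj : injective tf.
  by move=> x y /Psi_inj /frob_inj /Phi_inj.
pose sigma := perm sf_inj.
pose tau := perm tf_inj.
have spow n x : (sigma ^+ n)%g x = Psi (zeta ^+ n * Phi x).
  elim: n x => [|n IH] x; first by rewrite expg0 perm1 expr0 mul1r PhiK.
  by rewrite expgSr permM IH permE /sf PsiK exprSr mulrA [zeta ^+ n * zeta]mulrC.
have sq1 : (sigma ^+ (q + 1))%g = 1%g.
  by apply/permP => x; rewrite spow zeta_q1 mul1r PhiK perm1.
have gnat i : exists n, gpowz sigma i = (sigma ^+ n)%g.
  case: i => n; first by exists n.
  exists (n.+1 * q)%N; rewrite /=; apply/eqP; rewrite eq_invg_mul -expgD.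
  rewrite (_ : (n.+1 + n.+1 * q = (q + 1) * n.+1)%N); last first.
    by rewrite mulnDl mul1n addnC mulnC.
  by rewrite expgM sq1 expg1n.
have Q_Psi u : Q (Psi u) = Qp u by rewrite -PhiQ PsiK.
exists sigma, tau; split.
- split; split.
  + apply: lin_of_add => x y; rewrite !permE /sf PhiD mulrDr PsiD //.
  + by move=> x; rewrite permE Q_Psi /Qp N_zeta -/(Qp (Phi x)) PhiQ.
  + apply: lin_of_add => x y; rewrite !permE /tf PhiD frq PsiD //.
  + by move=> x; rewrite permE Q_Psi /Qp N_frob -/(Qp (Phi x)) PhiQ.
- apply/eqP => E; have := congr1 (fun s : {perm V m} => s (Psi 1)) E.
  rewrite perm1 permE /sf PsiK mulr1 => /Psi_inj Z.
  by move: zeta_ne1; rewrite Z eqxx.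
- split.
  + apply/permP => x; rewrite perm1 expgS expg1 permM !permE /tf PsiK.
    by rewrite -exprM qq PhiK.
  + apply/eqP; rewrite eq_sym eq_invg_mul; apply/eqP/permP => x.
    rewrite perm1 !permM !permE /sf /tf !PsiK.
    have frob2 (u : K) : (u ^+ q) ^+ q = u by rewrite -exprM qq.
    rewrite exprMn frob2 mulrA -exprSr (_ : zeta ^+ q.+1 = 1) ?mul1r ?PhiK //.
    by rewrite -addn1 zeta_q1.
- move=> i; have [n ->] := gnat i => hn x; rewrite spow => hx.
  apply/eqP; apply/negP => /negP x0.
  have P0 : Phi x != 0 by apply: contra x0 => /eqP E; apply/eqP; apply: Phi_inj; rewrite E Phi0.
  have : zeta ^+ n * Phi x = Phi x by rewrite -{2}hx PsiK.
  rewrite -{2}[Phi x]mul1r => /(mulIf P0) Z.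
  by move/eqP: hn; apply; apply/permP => y; rewrite spow Z mul1r PhiK perm1.
- move=> i; have [n ->] := gnat i.
  pose b := c0 / N (g ^+ n); pose s := b ^+ (2 ^ m.-1); pose y := s * g ^+ n.
  have gn0 : g ^+ n != 0 by rewrite expf_eq0 negb_and g0 orbT.
  have Nn0 : N (g ^+ n) != 0 by rewrite /N expf_eq0 negb_and gn0 orbT.
  have c0L' : c0 \in Lset by apply/inLP; exact: c0L.
  have bL : b ^+ q = b.
    by apply/inLP; apply: inL_mul => //; apply: inL_inv; apply/inLP; exact: NL.
  have sL : s ^+ q = s by rewrite /s -exprM mulnC exprM bL.
  have s2 : s ^+ 2 = b by rewrite /s -exprM -expnSr prednK.
  have Ny : N y = c0.
    rewrite /y N_mul NL_elt; last by apply/inLP.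
    by rewrite s2 /b mulfVK.
  have c00 : c0 != 0 by apply/eqP => E; move: T_c0; rewrite E T0 => /eqP; rewrite eq_sym oner_eq0.
  have y0 : y != 0.
    apply/eqP => E; move: Ny; rewrite E /N expr0n addn1 /= => E2.
    by move: c00; rewrite -E2 eqxx.
  have zg : zeta * g = g ^+ q.
    by rewrite /zeta -exprSr subn1 prednK // (leq_trans _ q_ge2).
  have frob2 (u : K) : (u ^+ q) ^+ q = u by rewrite -exprM qq.
  have yfix : (zeta ^+ n * y) ^+ q = y.
    rewrite /y mulrCA -exprMn zg exprMn sL -exprM mulnC exprM frob2 //.
  exists (Psi y); split.
  + by apply: contra y0 => /eqP E; apply/eqP; rewrite -(PsiK y) E Phi0.
  + by rewrite spow PsiK permE /tf PsiK yfix.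
  + by rewrite Q_Psi /Qp Ny T_c0 /tr oner_eq0.
Qed.

End FieldPart.

Theorem mainTheorem10 (m : nat) (hm : (1 <= m)%N) (Q : V m -> 'F_2)
  (hQ : is_quadratic_form Q) (harf : arf Q = 1) :
  exists sigma tau : {perm V m},
    [/\ (in_OQ Q sigma /\ in_OQ Q tau),
        sigma != (1%g),
        ((tau ^+ 2)%g = (1%g) /\
        (tau * sigma * tau)%g = (sigma^-1)%g),
        (forall i : int, gpowz sigma i != (1%g) ->
           forall x : V m, gpowz sigma i x = x -> x = 0)
      & (forall i : int, exists x : V m,
           [/\ x != 0, tau (gpowz sigma i x) = x & Q x = 1])].
Proof.
have mm : (0 < m + m)%N by rewrite addn_gt0 hm.
have [K ch cardK] := @pPrimePowerField 2 (m + m) (erefl true) mm.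
have [g hg] := exists_prim hm ch cardK.
have [l [ls hds]] := dual_ex hm ch cardK hg (leqnn m).
exact: (field_main hm ch cardK hg hds hQ harf).
Qed.
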